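(* Let $\mathcal{C}$ be a category. Let $\rho$ be a PBPO$^{+}$ rewrite rule consisting of morphisms $l : K \to L$, $r : K \to R$, monomorphisms $t_L : L \rightarrowtail L'$ and $t_K : K \rightarrowtail K'$, and $l' : K' \to L'$, such that $L \xleftarrow{l} K \xrightarrow{t_K} K'$ is a pullback of $L \xrightarrow{t_L} L' \xleftarrow{l'} K'$. Let $G_L$ be an object, $\alpha : G_L \to L'$ and $m : L \to G_L$ morphisms such that $L \xleftarrow{1_L} L \xrightarrow{m} G_L$ is a pullback of $L \xrightarrow{t_L} L' \xleftarrow{\alpha} G_L$, and let $G_L \xleftarrow{g_L} G_K \xrightarrow{u'} K'$ be a pullback of $G_L \xrightarrow{\alpha} L' \xleftarrow{l'} K'$. Then there exists a morphism $u : K \to G_K$ such that $L \xleftarrow{l} K \xrightarrow{u} G_K$ is a pullback of $L \xrightarrow{m} G_L \xleftarrow{g_L} G_K$, $t_K = u' \circ u$, and $u$ is a monomorphism.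
   Context: A PBPO$^{+}$ rewrite rule in a category is a diagram $L \xleftarrow{l} K \xrightarrow{r} R$ together with monomorphisms $t_L : L \rightarrowtail L'$, $t_K : K \rightarrowtail K'$ and a morphism $l' : K' \to L'$ such that the square $t_L \circ l = l' \circ t_K$ is a pullback square. The pair $(m,\alpha)$ with $L \xleftarrow{1_L} L \xrightarrow{m} G_L$ a pullback of $t_L$ and $\alpha$ is called a strong match. *)

(* Defs.v *)
Record Category := {
  Ob :> Type;
  Hom : Ob -> Ob -> Type;
  idm : forall A, Hom A A;
  comp : forall A B C, Hom B C -> Hom A B -> Hom A C;
  comp_assoc : forall A B C D (h : Hom C D) (g : Hom B C) (f : Hom A B),
      comp _ _ _ h (comp _ _ _ g f) = comp _ _ _ (comp _ _ _ h g) f;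
  comp_id_l : forall A B (f : Hom A B), comp _ _ _ (idm B) f = f;
  comp_id_r : forall A B (f : Hom A B), comp _ _ _ f (idm A) = f
}.

Arguments Hom {c} _ _.
Arguments idm {c} A.
Arguments comp {c A B C} _ _.

Notation "g ∘ f" := (comp g f) (at level 40, left associativity).

Definition mono {C : Category} {A B : C} (f : Hom A B) : Prop :=
  forall X (g h : Hom X A), f ∘ g = f ∘ h -> g = h.

(* [is_pullback f g p1 p2]:  A <-p1- P -p2-> B  is a pullback of
   the cospan  A -f-> Z <-g- B. *)
Definition is_pullback {C : Category} {A B Z P : C}
  (f : Hom A Z) (g : Hom B Z) (p1 : Hom P A) (p2 : Hom P B) : Prop :=
  f ∘ p1 = g ∘ p2 /\
  forall (X : C) (q1 : Hom X A) (q2 : Hom X B),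
    f ∘ q1 = g ∘ q2 ->
    exists h : Hom X P,
      (p1 ∘ h = q1 /\ p2 ∘ h = q2) /\
      forall h' : Hom X P, p1 ∘ h' = q1 -> p2 ∘ h' = q2 -> h' = h.

(* Main.v *)
Require Import Defs.

Theorem lemma1 (C : Category) (L K R L' K' GL GK : C)
  (l : Hom K L) (r : Hom K R) (tL : Hom L L') (tK : Hom K K') (l' : Hom K' L')
  (alpha : Hom GL L') (m : Hom L GL) (gL : Hom GK GL) (u' : Hom GK K') :
  mono tL -> mono tK ->
  is_pullback tL l' l tK ->
  is_pullback tL alpha (idm L) m ->
  is_pullback alpha l' gL u' ->
  exists u : Hom K GK,
    is_pullback m gL l u /\ tK = u' ∘ u /\ mono u.
Proof.
  intros mtL mtK [sq1 U1] [sq2 _] [sq3 U3].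
  rewrite comp_id_r in sq2.
  assert (E : alpha ∘ (m ∘ l) = l' ∘ tK).
  { rewrite comp_assoc, <- sq2. exact sq1. }
  destruct (U3 _ _ _ E) as [u [[Hu1 Hu2] _]].
  exists u. split; [|split].
  - split; [now rewrite Hu1|].
    intros X q1 q2 Hq.
    assert (E2 : tL ∘ q1 = l' ∘ (u' ∘ q2)).
    { rewrite sq2, <- comp_assoc, Hq, comp_assoc, sq3, comp_assoc. reflexivity. }
    destruct (U1 _ _ _ E2) as [h [[Hh1 Hh2] Uh]].
    exists h. split; [split; [exact Hh1|]|].
    + assert (E3 : alpha ∘ (gL ∘ q2) = l' ∘ (u' ∘ q2)).
      { rewrite !comp_assoc, sq3. reflexivity. }
      destruct (U3 _ _ _ E3) as [k [_ Uk]].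
      rewrite (Uk q2 eq_refl eq_refl).
      apply Uk.
      * rewrite comp_assoc, Hu1, <- comp_assoc, Hh1. exact Hq.
      * rewrite comp_assoc, Hu2. exact Hh2.
    + intros h' H1 H2. apply Uh; [exact H1|].
      rewrite <- Hu2, <- comp_assoc, H2. reflexivity.
  - now rewrite Hu2.
  - intros X g h H. apply mtK. rewrite <- Hu2, <- !comp_assoc, H. reflexivity.
Qed.
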